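(* Let $\mathbf{k}$ be a field, $p\ge3$ an integer, and let $\varphi:\mathbf{k}[e_1,\dots,e_{2p}]\to\mathbf{k}[u_1,\dots,u_p,\alpha]$ be the $\mathbf{k}$-algebra homomorphism with $\varphi(e_i)=u_i$ for $1\le i\le p-1$, $\varphi(e_p)=u_p+\alpha$, and $\varphi(e_i)=u_{i-p}\alpha$ for $p+1\le i\le 2p$. Let $\mathcal{A}=\operatorname{Im}(\varphi)$. Then for each $1\le i\le p-1$ and each $j\ge1$, the monomial $u_i\alpha^j$ lies in $\mathcal{A}$ (and hence in the initial algebra $\mathrm{in}(\mathcal{A})$ with respect to any monomial order).
   Context: For a monomial order on $\mathbf{k}[u_1,\dots,u_p,\alpha]$, the initial algebra $\mathrm{in}(\mathcal{A})$ is the $\mathbf{k}$-span of the leading monomials of the nonzero elements of $\mathcal{A}$. *)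

(* Defs.v *)
From HB Require Import structures.
From mathcomp Require Import all_boot all_algebra.
From mathcomp Require Import mpoly.
Set Implicit Arguments. Unset Strict Implicit. Unset Printing Implicit Defensive.
Import GRing.Theory.
Local Open Scope ring_scope.

(* Target ring k[u_1,...,u_p, alpha] = {mpoly F[p.+1]}:
   variable u_i (1 <= i <= p) is the variable of index i-1,
   alpha is the variable of index p (ord_max). *)
Definition uvar (F : fieldType) (p : nat) (i : nat) : {mpoly F[p.+1]} :=
  'X_(inord i.-1).
Definition alphavar (F : fieldType) (p : nat) : {mpoly F[p.+1]} :=
  'X_(@ord_max p).

Definition phi_e (F : fieldType) (p : nat) (i : nat) : {mpoly F[p.+1]} :=
  if (i < p)%N then uvar F p i
  else if (i == p)%N then uvar F p p + alphavar F p
  else uvar F p (i - p)%N * alphavar F p.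

(* The k-algebra homomorphism phi : k[e_1..e_2p] -> k[u_1..u_p,alpha],
   e_i (variable of index i-1) |-> phi_e i. *)
Definition phi (F : fieldType) (p : nat) (q : {mpoly F[2 * p]}) : {mpoly F[p.+1]} :=
  comp_mpoly [tuple phi_e F p i.+1 | i < 2 * p] q.

Definition in_image_phi (F : fieldType) (p : nat) (f : {mpoly F[p.+1]}) : Prop :=
  exists q : {mpoly F[2 * p]}, phi q = f.

(* Main.v *)
Require Import Defs.
From HB Require Import structures.
From mathcomp Require Import all_boot all_algebra.
From mathcomp Require Import mpoly.
Import GRing.Theory.
From mathcomp Require Import ring zify.
Local Open Scope ring_scope.

Lemma phiX (F : fieldType) (p k : nat) (hk : (k < 2 * p)%N) :
  phi ('X_(Ordinal hk) : {mpoly F[2 * p]}) = phi_e F p k.+1.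
Proof.
by rewrite /phi comp_mpolyXU -tnth_nth tnth_mktuple.
Qed.

Lemma imgM (F : fieldType) (p : nat) (a b : {mpoly F[p.+1]}) :
  in_image_phi a -> in_image_phi b -> in_image_phi (a * b).
Proof.
move=> [qa <-] [qb <-]; exists (qa * qb).
by rewrite /phi rmorphM.
Qed.

Lemma imgB (F : fieldType) (p : nat) (a b : {mpoly F[p.+1]}) :
  in_image_phi a -> in_image_phi b -> in_image_phi (a - b).
Proof.
move=> [qa <-] [qb <-]; exists (qa - qb).
by rewrite /phi comp_mpolyB.
Qed.

Lemma imgE (F : fieldType) (p k : nat) : (k < 2 * p)%N ->
  in_image_phi (phi_e F p k.+1).
Proof. move=> hk; exists 'X_(Ordinal hk); exact: phiX. Qed.

Theorem lemma6p3 (F : fieldType) (p : nat) (hp : (3 <= p)%N) (i j : nat)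
  (hi1 : (1 <= i)%N) (hi2 : (i <= p - 1)%N) (hj : (1 <= j)%N) :
  in_image_phi (uvar F p i * alphavar F p ^+ j).
Proof.
set u := uvar F p i; set a := alphavar F p.
have hip : (i < p)%N by lia.
have Hu : in_image_phi u.
  have := @imgE F p i.-1 ltac:(lia); rewrite prednK; last lia.
  by rewrite /phi_e hip.
have Hp : in_image_phi (uvar F p p + a).
  have := @imgE F p p.-1 ltac:(lia); rewrite prednK; last lia.
  by rewrite /phi_e ltnn eqxx.
have H2p : in_image_phi (uvar F p p * a).
  have := @imgE F p (2 * p).-1 ltac:(lia); rewrite prednK; last lia.
  have e1 : (2 * p < p)%N = false by lia.
  have e2 : (2 * p == p)%N = false by lia.
  have e3 : (2 * p - p)%N = p by lia.
  by rewrite /phi_e e1 e2 e3.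
have Hpi : in_image_phi (u * a).
  have := @imgE F p (p + i).-1 ltac:(lia); rewrite prednK; last lia.
  have e1 : (p + i < p)%N = false by lia.
  have e2 : (p + i == p)%N = false by lia.
  have e3 : (p + i - p)%N = i by lia.
  by rewrite /phi_e e1 e2 e3.
suff H : forall n, in_image_phi (u * a ^+ n) /\ in_image_phi (u * a ^+ n.+1).
  by case: j hj => // j _; case: (H j).
elim=> [|n [IH1 IH2]]; first by rewrite expr0 mulr1 expr1.
split=> //.
have -> : u * a ^+ n.+2 = (u * a ^+ n.+1) * (uvar F p p + a) - (u * a ^+ n) * (uvar F p p * a).
  by rewrite !exprS; ring.
by apply: imgB; apply: imgM.
Qed.
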